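(* For $1\le q\le\tilde q\le\mathsf n$, let $\widetilde X^{\tilde q}_{q:\mathsf n}$ be such that $\widetilde X^{\tilde q}_{\tilde q}\in\mathbb X$ is arbitrary and $\widetilde X^{\tilde q}_k=X_k$ for all $q\le k\le\mathsf n$ with $k\ne\tilde q$. Then for any $1\le q\le\tilde q\le\mathsf n$, \[\big|\log\mathbb P_{\pi_V}(X_q\mid X_{q+1:\mathsf n})-\log\mathbb P_{\pi_V}(\widetilde X^{\tilde q}_q\mid\widetilde X^{\tilde q}_{q+1:\mathsf n})\big|\le\nu_q^{-1}\prod_{k=q+1}^{\tilde q-1}(1-\nu_k)\] (empty products equal $1$).
   Context: Let $\mathsf n\ge1$, $\pi_V$ a probability on a measurable space $\mathbb V$, $\mathbb X$ a discrete set, $K_i:\mathbb X\times\mathbb V^2\to[0,\infty)$ with each $K_i(\cdot,v,w)$ a probability on $\mathbb X$. $\mathbb P_{\pi_V}$ is the law of $(V_{1:\mathsf n+1},X_{1:\mathsf n})$ with $V_i$ i.i.d. $\pi_V$ and, given $V$, $X_i$ independent with $\mathbb P(X_i=x\mid V)=K_i(x,V_i,V_{i+1})$; $\mathbb P_{\pi_V}(x_q\mid x_{q+1:\mathsf n})$ denotes the conditional probability that $X_q=x_q$ given $X_{q+1:\mathsf n}=x_{q+1:\mathsf n}$. Assumption H2: there exist $\nu_i>0$ with $\nu_i\le K_i(x,v,w)\le1$ for all $x,i,v,w$. *)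

(* Defs.v *)
From HB Require Import structures.
From mathcomp Require Import all_boot all_order all_algebra.
From mathcomp Require Import all_classical all_reals all_analysis.
Set Implicit Arguments. Unset Strict Implicit. Unset Printing Implicit Defensive.
Import Order.TTheory GRing.Theory Num.Theory.
Local Open Scope classical_set_scope.
Local Open Scope ring_scope.

(* Indices are 1-based as in the paper: X_1..X_n, V_1..V_{n+1};
   index 0 of the nat-indexed families is unused. *)

Section HMM.
Context {d : measure_display} {V : measurableType d} {R : realType}.

Definition upd {T : Type} (v : nat -> T) (k : nat) (w : T) : nat -> T :=
  fun j => if j == k then w else v j.

(* iterated integral of f with respect to pi in the coordinates 1..k
   (coordinate k outermost) : the expectation under the product law of
   V_1..V_k i.i.d. pi (by Tonelli) *)
Fixpoint iint (pi : probability V R) (k : nat) (f : (nat -> V) -> R)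
  (v : nat -> V) : R :=
  match k with
  | 0 => f v
  | k'.+1 => Rintegral pi setT (fun w => iint pi k' f (upd v k'.+1 w))
  end.

(* P_{pi_V}(X_{q:n} = x_{q:n}) = E[ prod_{i=q}^n K_i(x_i, V_i, V_{i+1}) ],
   V_1..V_{n+1} i.i.d. pi (empty product = 1 when q = n+1) *)
Definition probX {X : Type} (pi : probability V R) (K : nat -> X -> V -> V -> R)
  (n q : nat) (x : nat -> X) : R :=
  iint pi n.+1
    (fun v => \prod_(q <= i < n.+1) K i (x i) (v i) (v i.+1)) (fun _ => point).

Definition condP {X : Type} (pi : probability V R) (K : nat -> X -> V -> V -> R)
  (n q : nat) (x : nat -> X) : R :=
  probX pi K n q x / probX pi K n q.+1 x.

End HMM.

(* Main.v *)
Require Import Defs.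
From HB Require Import structures.
From mathcomp Require Import all_boot all_order all_algebra.
From mathcomp Require Import all_classical all_reals all_analysis.
From mathcomp Require Import measurable_realfun.
From mathcomp Require Import ring lra zify.
Import Order.TTheory GRing.Theory Num.Theory.
Local Open Scope classical_set_scope.
Local Open Scope ring_scope.

Section S.
Context {d : measure_display} {V : measurableType d} {R : realType}.
Variable pi : probability V R.

Lemma int_bd (f : V -> R) (M : R) : measurable_fun setT f ->
  (forall v, `|f v| <= M) -> pi.-integrable setT (EFin \o f).
Proof.
move=> mf fM; apply/integrableP; split; first exact/measurable_EFinP.
have M0 : 0 <= M by apply: le_trans (fM point).
have mf' : measurable_fun [set: V] (EFin \o f : V -> \bar R) by exact/measurable_EFinP.
have H := @integral_le_bound _ _ _ pi setT (EFin \o f) M%:E measurableT mf'.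
have /H : {ae pi, forall x, setT x -> (`|(EFin \o f) x| <= M%:E)%E}.
  by apply: aeW => v _ /=; rewrite lee_fin.
move=> H1; apply: le_lt_trans (H1 M0) _.
apply: lte_mul_pinfty => //.
exact: (le_lt_trans (probability_le1 pi measurableT) (ltry 1)).
Qed.

Lemma Rint_cst (c : R) : Rintegral pi setT (fun _ => c) = c.
Proof.
rewrite Rintegral_cst// -[RHS]mulr1; congr (_ * _).
exact: (congr1 fine (probability_setT pi)).
Qed.

Definition Top (k : V -> V -> R) (h : V -> R) : V -> R :=
  fun w => Rintegral pi setT (fun u => h u * k u w).

Definition good (h : V -> R) := measurable_fun setT h /\ forall v, 0 <= h v <= 1.
Definition goodK (k : V -> V -> R) (nu : R) :=
  measurable_fun setT (fun p : V * V => k p.1 p.2) /\ 0 <= nu /\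
  forall u w, nu <= k u w <= 1.

Lemma kmeas1 k nu w : goodK k nu -> measurable_fun setT (fun u => k u w).
Proof.
move=> [mk _].
have -> : (fun u => k u w) = (fun p : V * V => k p.1 p.2) \o (fun u => (u, w)) by [].
apply: measurableT_comp => //.
Qed.

Lemma prod_meas (h : V -> R) k nu w : goodK k nu -> measurable_fun setT h ->
  measurable_fun setT (fun u => h u * k u w).
Proof. by move=> gk mh; apply: measurable_funM => //; exact: kmeas1 gk. Qed.

Lemma Top_meas k nu h : goodK k nu -> good h -> measurable_fun setT (Top k h).
Proof.
move=> [mk [nu0 kb]] [mh hb].
have -> : Top k h = fine \o (fubini_G pi (EFin \o (fun p : V * V => h p.1 * k p.1 p.2))).
  by [].
apply: measurableT_comp; first exact: fine_measurable.
apply: measurable_fun_fubini_tonelli_G.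
  apply/measurable_EFinP; apply: measurable_funM => //.
  exact: measurableT_comp.
move=> [u w] /=; rewrite lee_fin mulr_ge0//.
  by case/andP: (hb u).
by apply: le_trans (proj1 (andP (kb u w))).
Qed.

Lemma int_prod k nu (h : V -> R) M w : goodK k nu -> measurable_fun setT h ->
  (forall v, `|h v| <= M) -> pi.-integrable setT (EFin \o (fun u => h u * k u w)).
Proof.
move=> gk mh hM; apply: (int_bd _ M); first exact: prod_meas gk mh.
move=> v; rewrite normrM.
have [_ [nu0 kb]] := gk; have /andP[k1 k2] := kb v w.
have k0 : 0 <= k v w by apply: le_trans k1.
rewrite (ger0_norm k0); apply: le_trans (hM v).
by rewrite ler_piMr.
Qed.

Lemma good_bd h : good h -> forall v, `|h v| <= 1.
Proof. by move=> [_ hb] v; have /andP[h0 h1] := hb v; rewrite ger0_norm. Qed.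

Lemma Top_good k nu h : goodK k nu -> good h -> good (Top k h).
Proof.
move=> gk gh; split; first exact: Top_meas gk gh.
have [_ [nu0 kb]] := gk; have [mh hb] := gh.
move=> w; apply/andP; split.
  apply: Rintegral_ge0 => u _; have /andP[h0 _] := hb u.
  by rewrite mulr_ge0// (le_trans nu0 (proj1 (andP (kb u w)))).
rewrite -[X in _ <= X](Rint_cst 1).
apply: le_Rintegral => //.
- exact: (int_prod _ _ _ 1 w gk mh (good_bd _ gh)).
- by apply: (int_bd _ 1) => // v; rewrite normr1.
- move=> u _; have /andP[h0 h1] := hb u; have /andP[k1 k2] := kb u w.
  by rewrite mulr_ile1// (le_trans nu0 k1).
Qed.

Lemma Top_lo k nu f h a : goodK k nu -> good f -> good h -> 0 <= a ->
  (forall u, a * f u <= h u) -> forall w, a * Top k f w <= Top k h w.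
Proof.
move=> gk gf gh a0 afh w.
have [mf _] := gf; have [mh _] := gh.
rewrite /Top -RintegralZl//; last exact: (int_prod _ _ _ 1 w gk mf (good_bd _ gf)).
under eq_Rintegral do rewrite mulrA.
apply: le_Rintegral => //.
- apply: (int_prod _ _ _ a w gk) => [|v].
    by apply: measurable_funM => //.
  by rewrite normrM (ger0_norm a0) ler_piMr// (good_bd _ gf).
- exact: (int_prod _ _ _ 1 w gk mh (good_bd _ gh)).
- move=> u _; rewrite ler_wpM2r//.
  have [_ [nu0 kb]] := gk; exact: (le_trans nu0 (proj1 (andP (kb u w)))).
Qed.

Lemma Top_hi k nu f h b : goodK k nu -> good f -> good h -> 0 <= b ->
  (forall u, h u <= b * f u) -> forall w, Top k h w <= b * Top k f w.
Proof.
move=> gk gf gh b0 afh w.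
have [mf _] := gf; have [mh _] := gh.
rewrite /Top -RintegralZl//; last exact: (int_prod _ _ _ 1 w gk mf (good_bd _ gf)).
under [X in _ <= X]eq_Rintegral do rewrite mulrA.
apply: le_Rintegral => //.
- exact: (int_prod _ _ _ 1 w gk mh (good_bd _ gh)).
- apply: (int_prod _ _ _ b w gk) => [|v].
    by apply: measurable_funM => //.
  by rewrite normrM (ger0_norm b0) ler_piMr// (good_bd _ gf).
- move=> u _; rewrite ler_wpM2r//.
  have [_ [nu0 kb]] := gk; exact: (le_trans nu0 (proj1 (andP (kb u w)))).
Qed.

Lemma Top_ge k nu h c : goodK k nu -> good h -> 0 <= c ->
  (forall u, c <= h u) -> forall w, c * nu <= Top k h w.
Proof.
move=> gk gh c0 ch w; have [mh _] := gh; have [_ [nu0 kb]] := gk.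
rewrite -[X in X <= _](Rint_cst (c * nu)).
apply: le_Rintegral => //.
- by apply: (int_bd _ `|c * nu|) => // v.
- exact: (int_prod _ _ _ 1 w gk mh (good_bd _ gh)).
- move=> u _; apply: ler_pM => //; exact: (proj1 (andP (kb u w))).
Qed.

Definition mb (f : V -> R) := measurable_fun setT f /\ exists M, forall v, `|f v| <= M.

Lemma mb_int f : mb f -> pi.-integrable setT (EFin \o f).
Proof. by move=> [mf [M fM]]; exact: (int_bd _ M). Qed.

Lemma mb_good h : good h -> mb h.
Proof. by move=> gh; split; [exact: gh.1 | exists 1; exact: good_bd]. Qed.

Lemma mbB f g : mb f -> mb g -> mb (fun u => f u - g u).
Proof.
move=> [mf [M fM]] [mg [N gN]]; split; first exact: measurable_funB.
exists (M + N) => v; apply: le_trans (ler_normB _ _) _; exact: lerD.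
Qed.

Lemma mbZ c f : mb f -> mb (fun u => c * f u).
Proof.
move=> [mf [M fM]]; split; first exact: measurable_funM.
exists (`|c| * M) => v; rewrite normrM; apply: ler_wpM2l => //.
Qed.

Lemma mbM f g : mb f -> mb g -> mb (fun u => f u * g u).
Proof.
move=> [mf [M fM]] [mg [N gN]]; split; first exact: measurable_funM.
exists (M * N) => v; rewrite normrM; apply: ler_pM => //.
Qed.

Lemma mb_k k nu w : goodK k nu -> mb (fun u => k u w).
Proof.
move=> gk; split; first exact: kmeas1 gk.
exists 1 => v; have [_ [nu0 kb]] := gk; have /andP[k1 k2] := kb v w.
by rewrite ger0_norm// (le_trans nu0 k1).
Qed.

Lemma Rint_lin f g c : mb f -> mb g ->
  Rintegral pi setT (fun u => f u - c * g u) =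
  Rintegral pi setT f - c * Rintegral pi setT g.
Proof.
move=> mf mg; rewrite RintegralB//; last exact/mb_int/mbZ.
  by rewrite RintegralZl//; exact: mb_int.
exact: mb_int.
Qed.

Ltac mbt gk := repeat (first [ apply: mb_int | apply: mbB | apply: mbZ | apply: mbM | exact: mb_good | exact: (mb_k _ _ _ gk) | eassumption]).

Lemma Top_le_int k nu f w : goodK k nu -> good f ->
  Top k f w <= Rintegral pi setT f.
Proof.
move=> gk gf; apply: le_Rintegral => //.
- by mbt gk.
- exact/mb_int/mb_good.
- move=> u _; have [_ [nu0 kb]] := gk; have /andP[k1 k2] := kb u w.
  have [_ fb] := gf; have /andP[f0 f1] := fb u.
  by rewrite ler_piMr.
Qed.

Lemma contract k nu f h a b : goodK k nu -> good f -> good h -> 0 <= a -> a <= b ->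
  (forall u, a * f u <= h u) -> (forall u, h u <= b * f u) ->
  exists a' b', [/\ a <= a', a' <= b', b' - a' <= (1 - nu) * (b - a),
     forall w, a' * Top k f w <= Top k h w & forall w, Top k h w <= b' * Top k f w].
Proof.
move=> gk gf gh a0 ab afh hbf.
have [_ [nu0 kb]] := gk.
have nu1 : nu <= 1 by have /andP[k1 k2] := kb point point; exact: le_trans k2.
have [mf fb] := gf; have [mh hb] := gh.
have b0 : 0 <= b by exact: le_trans ab.
set F := Rintegral pi setT f; set H := Rintegral pi setT h.
have F0 : 0 <= F by apply: Rintegral_ge0 => u _; case/andP: (fb u).
have Tf0 w : 0 <= Top k f w by case/andP: ((Top_good _ _ _ gk gf).2 w).
have Th0 w : 0 <= Top k h w by case/andP: ((Top_good _ _ _ gk gh).2 w).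
have TfF w : Top k f w <= F by exact: Top_le_int _ _ _ _ gk gf.
have lo := Top_lo _ _ _ _ _ gk gf gh a0 afh; have hi := Top_hi _ _ _ _ _ gk gf gh b0 hbf.
have [F0'|Fpos] := eqVneq F 0.
  have Tf00 w : Top k f w = 0 by apply/eqP; rewrite eq_le Tf0 andbT -F0' TfF.
  have Th00 w : Top k h w = 0.
    by apply/eqP; rewrite eq_le Th0 andbT; apply: le_trans (hi w) _; rewrite Tf00 mulr0.
  exists a, a; split.
  - by [].
  - by [].
  - by rewrite subrr mulr_ge0// subr_ge0.
  - by move=> w; rewrite Tf00 Th00 mulr0.
  - by move=> w; rewrite Tf00 Th00 mulr0.
have mbf := mb_good _ gf; have mbh := mb_good _ gh.
have mbfk w := mbM _ _ mbf (mb_k _ _ w gk); have mbhk w := mbM _ _ mbh (mb_k _ _ w gk).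
have Plo w : nu * (H - a * F) <= Top k h w - a * Top k f w.
  rewrite /H /F -Rint_lin// /Top -Rint_lin// -RintegralZl//; last by mbt gk.
  apply: le_Rintegral => //.
  - by mbt gk.
  - by mbt gk.
  - move=> u _; have /andP[k1 k2] := kb u w.
    have h1 : 0 <= h u - a * f u by rewrite subr_ge0.
    have h2 : 0 <= k u w - nu by rewrite subr_ge0.
    have := mulr_ge0 h1 h2; nra.
have Qlo w : nu * (b * F - H) <= b * Top k f w - Top k h w.
  have E1 : b * F - H = - (H - b * F) by ring.
  have E2 : b * Top k f w - Top k h w = - (Top k h w - b * Top k f w) by ring.
  rewrite E1 E2 /H /F -Rint_lin// /Top -Rint_lin// mulrN lerN2 -RintegralZl//;
    last by mbt gk.
  apply: le_Rintegral => //.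
  - by mbt gk.
  - by mbt gk.
  - move=> u _; have /andP[k1 k2] := kb u w.
    have h1 : 0 <= b * f u - h u by rewrite subr_ge0.
    have h2 : 0 <= k u w - nu by rewrite subr_ge0.
    have := mulr_ge0 h1 h2; nra.
have Fp : 0 < F by rewrite lt_def Fpos F0.
have Pge : 0 <= H - a * F.
  rewrite subr_ge0 /H /F -RintegralZl//; last by mbt gk.
  apply: le_Rintegral => //; try by mbt gk.
have Qge : 0 <= b * F - H.
  rewrite subr_ge0 /H /F -RintegralZl//; last by mbt gk.
  apply: le_Rintegral => //; try by mbt gk.
set r := nu * (H - a * F) / F; set s := nu * (b * F - H) / F.
have rF : r * F = nu * (H - a * F) by rewrite /r divfK.
have sF : s * F = nu * (b * F - H) by rewrite /s divfK.
have r0 : 0 <= r by rewrite /r divr_ge0// mulr_ge0.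
have s0 : 0 <= s by rewrite /s divr_ge0// mulr_ge0.
have rs : r + s = nu * (b - a).
  apply: (mulIf Fpos); rewrite mulrDl rF sF; ring.
exists (a + r), (b - s); split.
- by rewrite lerDl.
- have : 0 <= (1 - nu) * (b - a) by rewrite mulr_ge0// subr_ge0.
  lra.
- have -> : b - s - (a + r) = (b - a) - (r + s) by ring.
  by rewrite rs; lra.
- move=> w; have := Plo w; have := TfF w; move: rF r0; nra.
- move=> w; have := Qlo w; have := TfF w; move: sF s0; nra.
Qed.

Lemma Rint_lo f h a : good f -> good h -> 0 <= a -> (forall u, a * f u <= h u) ->
  a * Rintegral pi setT f <= Rintegral pi setT h.
Proof.
move=> gf gh a0 afh; have mf := mb_good _ gf; have mh := mb_good _ gh.
rewrite -RintegralZl//; last exact: mb_int.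
apply: le_Rintegral => //.
all: try (by apply: mb_int). all: try (by apply/mb_int/mbZ).
Qed.

Lemma Rint_hi f h b : good f -> good h -> 0 <= b -> (forall u, h u <= b * f u) ->
  Rintegral pi setT h <= b * Rintegral pi setT f.
Proof.
move=> gf gh a0 afh; have mf := mb_good _ gf; have mh := mb_good _ gh.
rewrite -RintegralZl//; last exact: mb_int.
apply: le_Rintegral => //.
all: try (by apply: mb_int). all: try (by apply/mb_int/mbZ).
Qed.

Lemma Rint_ge h c : good h -> (forall u, c <= h u) -> c <= Rintegral pi setT h.
Proof.
move=> gh ch; have mh := mb_good _ gh.
rewrite -[X in X <= _](Rint_cst c).
apply: le_Rintegral => //.
all: try (by apply: mb_int). all: try (by apply: (int_bd _ `|c|) => // v).
Qed.

Lemma good1 : good (fun _ => 1).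
Proof. by split => // v; rewrite ler01 lexx. Qed.

Variables (X : Type) (n : nat) (nu : nat -> R) (K : nat -> X -> V -> V -> R).
Hypothesis hK : forall i (z : X), (1 <= i <= n)%N -> goodK (fun u w => K i z u w) (nu i).
Hypothesis nupos : forall i, (1 <= i <= n)%N -> 0 < nu i.

Fixpoint prop (x : nat -> X) (s : nat) (h : V -> R) (m : nat) : V -> R :=
  if m is m'.+1 then Top (fun u w => K (s + m')%N (x (s + m')%N) u w) (prop x s h m')
  else h.

Lemma prop_good x s h m : good h -> (1 <= s)%N -> (s + m <= n.+1)%N -> good (prop x s h m).
Proof.
move=> gh s1; elim: m => [|m IH] //= hm.
apply: (Top_good _ (nu (s + m)%N)); last by apply: IH; lia.
apply: hK; lia.
Qed.

Lemma prop_shift x s h m : prop x s h m.+1 = prop x s.+1 (Top (fun u w => K s (x s) u w) h) m.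
Proof.
elim: m => [|m IH] /=; first by rewrite addn0.
by rewrite -IH /= addSnnS.
Qed.

Lemma prop_add x s h m1 m2 : prop x s h (m1 + m2) = prop x (s + m1) (prop x s h m1) m2.
Proof.
elim: m2 => [|m2 IH]; first by rewrite addn0.
by rewrite addnS /= IH addnA.
Qed.

Lemma prop_ext x y s h m : (forall i, (s <= i < s + m)%N -> x i = y i) ->
  prop x s h m = prop y s h m.
Proof.
elim: m => [|m IH] //= hxy.
rewrite IH; last by move=> i hi; apply: hxy; lia.
by rewrite hxy //; lia.
Qed.

Lemma prop_lo x s f h a m : good f -> good h -> 0 <= a -> (1 <= s)%N -> (s + m <= n.+1)%N ->
  (forall u, a * f u <= h u) -> forall w, a * prop x s f m w <= prop x s h m w.
Proof.
move=> gf gh a0 s1; elim: m => [|m IH] //= hm afh w.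
apply: (Top_lo _ (nu (s + m)%N)) => //; first by apply: hK; lia.
- by apply: prop_good => //; lia.
- by apply: prop_good => //; lia.
- by apply: IH => //; lia.
Qed.

Lemma prop_hi x s f h b m : good f -> good h -> 0 <= b -> (1 <= s)%N -> (s + m <= n.+1)%N ->
  (forall u, h u <= b * f u) -> forall w, prop x s h m w <= b * prop x s f m w.
Proof.
move=> gf gh a0 s1; elim: m => [|m IH] //= hm afh w.
apply: (Top_hi _ (nu (s + m)%N)) => //; first by apply: hK; lia.
- by apply: prop_good => //; lia.
- by apply: prop_good => //; lia.
- by apply: IH => //; lia.
Qed.

Lemma prop_pos x s h c m : good h -> 0 < c -> (1 <= s)%N -> (s + m <= n.+1)%N ->
  (forall u, c <= h u) -> exists2 c', 0 < c' & forall w, c' <= prop x s h m w.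
Proof.
move=> gh c0 s1; elim: m => [|m IH] /= hm ch; first by exists c.
have [c' c'0 hc'] := IH ltac:(lia) ch.
exists (c' * nu (s + m)%N); first by rewrite mulr_gt0// nupos//; lia.
have gK : goodK (fun u w => K (s + m)%N (x (s + m)%N) u w) (nu (s + m)%N) by apply: hK; lia.
apply: (Top_ge _ _ _ _ gK).
- by apply: prop_good => //; lia.
- exact: ltW.
- exact: hc'.
Qed.

Lemma contract_iter x s f h a b m : good f -> good h -> 0 <= a -> a <= b ->
  (1 <= s)%N -> (s + m <= n.+1)%N ->
  (forall u, a * f u <= h u) -> (forall u, h u <= b * f u) ->
  exists a' b', [/\ a <= a', a' <= b',
     b' - a' <= (b - a) * \prod_(s <= k < s + m) (1 - nu k),
     forall w, a' * prop x s f m w <= prop x s h m w &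
     forall w, prop x s h m w <= b' * prop x s f m w].
Proof.
move=> gf gh a0 ab s1; elim: m => [|m IH] hm afh hbf.
  exists a, b; split => //; first by rewrite addn0 big_geq// mulr1.
have [a1 [b1 [aa1 a1b1 ba1 lo1 hi1]]] := IH ltac:(lia) afh hbf.
have gK : goodK (fun u w => K (s + m)%N (x (s + m)%N) u w) (nu (s + m)%N) by apply: hK; lia.
have [a2 [b2 [aa2 a2b2 ba2 lo2 hi2]]] := contract _ _ _ _ _ _ gK (prop_good x s f m gf s1 ltac:(lia))
  (prop_good x s h m gh s1 ltac:(lia)) (le_trans a0 aa1) a1b1 lo1 hi1.
exists a2, b2; split => //=.
- exact: le_trans aa2.
- rewrite addnS big_nat_recr /=; last by lia.
  apply: (le_trans ba2).
  have nu1 : 0 <= 1 - nu (s + m)%N.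
    have [_ [nu0 kb]] := gK; have /andP[k1 k2] := kb point point.
    by rewrite subr_ge0 (le_trans k1 k2).
  by rewrite mulrA [X in _ <= X]mulrC; apply: ler_wpM2l.
Qed.

Lemma upd_prod x (v : nat -> V) k w a : (k.+1 < a)%N ->
  \prod_(a <= i < n.+1) K i (x i) (upd v k.+1 w i) (upd v k.+1 w i.+1) =
  \prod_(a <= i < n.+1) K i (x i) (v i) (v i.+1).
Proof.
move=> ka; apply: eq_big_nat => i /andP[ai _]; rewrite /upd.
have -> : (i == k.+1) = false by apply/eqP; lia.
have -> : (i.+1 == k.+1) = false by apply/eqP; lia.
by [].
Qed.

Lemma iint_prop x q k v : (1 <= q)%N -> (k <= n)%N ->
  iint pi k (fun v => \prod_(q <= i < n.+1) K i (x i) (v i) (v i.+1)) v =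
  prop x q (fun _ => 1) (k.+1 - q) (v k.+1) *
  \prod_(maxn q k.+1 <= i < n.+1) K i (x i) (v i) (v i.+1).
Proof.
move=> q1; elim: k v => [|k IH] v kn.
  have -> : (1 - q = 0)%N by lia.
  have -> : maxn q 1 = q by lia.
  by rewrite /= mul1r.
rewrite /=.
have E : (fun w => iint pi k (fun v => \prod_(q <= i < n.+1) K i (x i) (v i) (v i.+1))
            (upd v k.+1 w)) =
         (fun w => prop x q (fun _ => 1) (k.+1 - q) w *
            \prod_(maxn q k.+1 <= i < n.+1) K i (x i) (upd v k.+1 w i) (upd v k.+1 w i.+1)).
  apply/funext => w; rewrite IH; last by lia.
  by rewrite /upd eqxx.
rewrite E; clear E.
case: (leqP q k.+1) => hq.
  have -> : maxn q k.+2 = k.+2 by lia.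
  have E : (fun w => prop x q (fun _ => 1) (k.+1 - q) w *
            \prod_(k.+1 <= i < n.+1) K i (x i) (upd v k.+1 w i) (upd v k.+1 w i.+1)) =
           (fun w => prop x q (fun _ => 1) (k.+1 - q) w * K k.+1 (x k.+1) w (v k.+2) *
            \prod_(k.+2 <= i < n.+1) K i (x i) (v i) (v i.+1)).
    apply/funext => w; rewrite big_ltn; last by lia.
    rewrite upd_prod; last by lia.
    rewrite /upd eqxx.
    have -> : (k.+2 == k.+1) = false by apply/eqP; lia.
    by rewrite mulrA.
  rewrite E RintegralZr//; last first.
    apply: mb_int; apply: mbM; first apply: mb_good.
      by apply: prop_good => //; [exact: good1 | lia].
    apply: (mb_k _ (nu k.+1)); apply: hK; lia.
  congr (_ * _).
  have -> : (k.+2 - q = (k.+1 - q).+1)%N by lia.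
  rewrite /=.
  have -> : (q + (k.+1 - q) = k.+1)%N by lia.
  by [].
have -> : (k.+1 - q = 0)%N by lia.
have -> : (k.+2 - q = 0)%N by lia.
have -> : maxn q k.+2 = q by lia.
rewrite /=.
transitivity (Rintegral pi setT (fun _ : V => \prod_(q <= i < n.+1) K i (x i) (v i) (v i.+1))).
  apply: eq_Rintegral => w _ /=; rewrite mul1r upd_prod //; lia.
by rewrite Rint_cst mul1r.
Qed.

Lemma probX_prop x q : (1 <= q)%N ->
  probX pi K n q x = Rintegral pi setT (prop x q (fun _ => 1) (n.+1 - q)).
Proof.
move=> q1; rewrite /probX /=.
apply: eq_Rintegral => w _.
rewrite iint_prop// big_geq; last by lia.
by rewrite mulr1 /upd eqxx.
Qed.

Lemma ln_bound (r r' a b nq P : R) : 0 < nq -> nq <= a -> a <= r <= b -> a <= r' <= b ->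
  b - a <= (1 - nq) * P -> 0 <= P -> `|ln r - ln r'| <= nq^-1 * P.
Proof.
move=> nq0 nqa.
wlog: r r' / r' <= r.
  move=> W hr hr' hb P0; have [le|lt] := leP r' r; first exact: W.
  by rewrite distrC; apply: W => //; exact: ltW.
move=> rr /andP[ar rb] /andP[ar' r'b] hb P0.
have r'0 : 0 < r' by apply: lt_le_trans nq0 (le_trans nqa ar').
have r0 : 0 < r by apply: lt_le_trans r'0 rr.
have lnle : ln r' <= ln r by rewrite ler_ln// posrE.
rewrite ger0_norm ?subr_ge0// -ln_div ?posrE//.
have hq : 0 < r / r' by rewrite divr_gt0.
have E : r / r' = 1 + (r / r' - 1) by ring.
rewrite E; apply: le_trans (le_ln1Dx _) _; first by lra.
have -> : r / r' - 1 = (r - r') / r' by field; rewrite gt_eqF.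
rewrite ler_pdivrMr//.
set t := nq^-1 * P.
have t0 : 0 <= t by rewrite /t mulr_ge0// invr_ge0 ltW.
have tn : t * nq = P by rewrite /t mulrAC mulVf ?mul1r// gt_eqF.
have nq1 : (1 - nq) * P <= P by nra.
nra.
Qed.

Lemma main_sec (q qt : nat) (x : nat -> X) (xt : X) :
  (1 <= q)%N -> (q <= qt)%N -> (qt <= n)%N ->
  `| ln (condP pi K n q x) - ln (condP pi K n q (upd x qt xt)) |
    <= (nu q)^-1 * \prod_(q.+1 <= k < qt) (1 - nu k).
Proof.
move=> q1 qqt qtn.
set y := upd x qt xt.
have qn : (q <= n)%N by lia.
have gKq z : goodK (fun u w => K q z u w) (nu q) by apply: hK; lia.
have nq0 : 0 < nu q by apply: nupos; lia.
have nq1 : nu q <= 1.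
  by have [_ [_ kb]] := gKq (x q); have /andP[k1 k2] := kb point point; exact: le_trans k2.
set g := fun z : nat -> X => Top (fun u w => K q (z q) u w) (fun _ => 1).
have gg z : good (g z) by exact: (Top_good _ _ _ (gKq (z q)) good1).
have glo z u : nu q * 1 <= g z u.
  rewrite mulr1 -[X in X <= _]mul1r.
  exact: (Top_ge _ _ _ _ (gKq (z q)) good1 ler01 (fun _ => lexx _)).
have ghi z u : g z u <= 1 * 1 by rewrite mul1r; case/andP: ((gg z).2 u).
have condE z : condP pi K n q z =
    Rintegral pi setT (prop z q.+1 (g z) (n - q)) /
    Rintegral pi setT (prop z q.+1 (fun _ => 1) (n - q)).
  rewrite /condP !probX_prop//.
  have -> : (n.+1 - q = (n - q).+1)%N by lia.
  have -> : (n.+1 - q.+1 = n - q)%N by lia.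
  by rewrite prop_shift.
have Dpos z : 0 < Rintegral pi setT (prop z q.+1 (fun _ => 1) (n - q)).
  have [c c0 hc] := prop_pos z q.+1 (fun _ => 1) 1 (n - q) good1 ltr01 ltac:(lia) ltac:(lia)
    (fun _ => lexx _).
  apply: lt_le_trans c0 _; apply: Rint_ge => //.
  by apply: prop_good => //; [exact: good1 | lia].
have ratio z a b : 
    a * Rintegral pi setT (prop z q.+1 (fun _ => 1) (n - q)) <=
      Rintegral pi setT (prop z q.+1 (g z) (n - q)) ->
    Rintegral pi setT (prop z q.+1 (g z) (n - q)) <=
      b * Rintegral pi setT (prop z q.+1 (fun _ => 1) (n - q)) ->
    a <= condP pi K n q z <= b.
  move=> h1 h2; rewrite condE; apply/andP; split.
    by rewrite ler_pdivlMr.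
  by rewrite ler_pdivrMr.
have P0 : 0 <= \prod_(q.+1 <= k < qt) (1 - nu k).
  rewrite big_seq; apply: prodr_ge0 => k; rewrite mem_index_iota => /andP[k1 k2].
  have [_ [_ kb]] := hK k (x k) ltac:(lia).
  by have /andP[kk1 kk2] := kb point point; rewrite subr_ge0 (le_trans kk1 kk2).
have [qteq|qtlt] := eqVneq qt q.
  rewrite big_geq; last by lia.
  have pe φ : prop y q.+1 φ (n - q) = prop x q.+1 φ (n - q).
    apply: prop_ext => i hi; rewrite /y /upd.
    by have -> : (i == qt) = false by apply/eqP; lia.
  have bnd z : nu q <= condP pi K n q z <= 1.
    have gF : good (prop z q.+1 (fun _ => 1) (n - q)) by apply: prop_good => //; [exact: good1|lia].
    have gG : good (prop z q.+1 (g z) (n - q)) by apply: prop_good => //; lia.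
    apply: ratio.
      exact: (Rint_lo _ _ _ gF gG (ltW nq0) (prop_lo z q.+1 _ _ _ (n - q) good1 (gg z) (ltW nq0) ltac:(lia) ltac:(lia) (glo z))).
    exact: (Rint_hi _ _ _ gF gG ler01 (prop_hi z q.+1 _ _ _ (n - q) good1 (gg z) ler01 ltac:(lia) ltac:(lia) (ghi z))).
  apply: (ln_bound _ _ _ _ _ _ nq0 (lexx _) (bnd x) (bnd y)); last exact: ler01.
  by rewrite mulr1.
have qlt : (q < qt)%N by rewrite ltn_neqAle qqt andbT eq_sym.
set m1 := (qt - q.+1)%N; set m2 := (n.+1 - qt)%N.
have nm : (n - q = m1 + m2)%N by rewrite /m1 /m2; lia.
have sm : (q.+1 + m1 = qt)%N by rewrite /m1; lia.
have gy : g y = g x by rewrite /g /y /upd; have -> : (q == qt) = false by apply/eqP; lia.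
have pe φ : prop y q.+1 φ m1 = prop x q.+1 φ m1.
  apply: prop_ext => i hi; rewrite /y /upd.
  by have -> : (i == qt) = false by apply/eqP; lia.
have [a [b [aa ab ba lo hi]]] := contract_iter x q.+1 (fun _ => 1) (g x) (nu q) 1 m1 good1 (gg x)
  (ltW nq0) nq1 ltac:(lia) ltac:(lia) (glo x) (ghi x).
have spl z φ : prop z q.+1 φ (n - q) = prop z qt (prop z q.+1 φ m1) m2.
  by rewrite nm prop_add sm.
have gf : good (prop x q.+1 (fun _ => 1) m1) by apply: prop_good => //; [exact: good1|lia].
have gh : good (prop x q.+1 (g x) m1) by apply: prop_good => //; lia.
have a0 : 0 <= a by apply: le_trans (ltW nq0) aa.
have bnd z : z = x \/ z = y -> a <= condP pi K n q z <= b.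
  move=> hz.
  have E1 : prop z q.+1 (g z) (n - q) = prop z qt (prop x q.+1 (g x) m1) m2.
    by rewrite spl; case: hz => ->; rewrite ?pe ?gy.
  have E2 : prop z q.+1 (fun _ => 1) (n - q) = prop z qt (prop x q.+1 (fun _ => 1) m1) m2.
    by rewrite spl; case: hz => ->; rewrite ?pe.
  have b0 : 0 <= b by exact: le_trans ab.
  have gF : good (prop z qt (prop x q.+1 (fun _ => 1) m1) m2) by apply: prop_good => //; lia.
  have gG : good (prop z qt (prop x q.+1 (g x) m1) m2) by apply: prop_good => //; lia.
  apply: ratio; rewrite E1 E2.
    exact: (Rint_lo _ _ _ gF gG a0 (prop_lo z qt _ _ _ m2 gf gh a0 ltac:(lia) ltac:(lia) lo)).
  exact: (Rint_hi _ _ _ gF gG b0 (prop_hi z qt _ _ _ m2 gf gh b0 ltac:(lia) ltac:(lia) hi)).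
apply: (ln_bound _ _ _ _ _ _ nq0 aa (bnd x (or_introl erefl)) (bnd y (or_intror erefl))) => //.
by move: ba; rewrite sm.
Qed.
End S.

Theorem lemma8 (d : measure_display) (V : measurableType d) (R : realType)
  (X : choiceType) (n : nat) (pi : probability V R)
  (K : nat -> X -> V -> V -> R) (nu : nat -> R)
  (K_meas : forall i (x : X), (1 <= i <= n)%N ->
     measurable_fun setT (fun vw : V * V => K i x vw.1 vw.2))
  (K_ge0 : forall i x v w, (1 <= i <= n)%N -> 0 <= K i x v w)
  (K_prob : forall i v w, (1 <= i <= n)%N ->
     (\esum_(x in [set: X]) (K i x v w)%:E = 1)%E)
  (nu_gt0 : forall i, (1 <= i <= n)%N -> 0 < nu i)
  (H2 : forall i x v w, (1 <= i <= n)%N -> nu i <= K i x v w <= 1)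
  (q qt : nat) (hq : (1 <= q)%N) (hqqt : (q <= qt)%N) (hqtn : (qt <= n)%N)
  (x : nat -> X) (xt : X) :
  `| ln (condP pi K n q x) - ln (condP pi K n q (upd x qt xt)) |
    <= (nu q)^-1 * \prod_(q.+1 <= k < qt) (1 - nu k).
Proof.
apply: (@main_sec d V R pi X n nu K) => //.
move=> i z hi; split; first exact: K_meas.
split; first exact: ltW (nu_gt0 i hi).
move=> u w; exact: H2.
Qed.
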